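(* Consider a multi-layer perceptron with $L$ layers, where layer $\ell\in\{1,\ldots,L\}$ has weight matrix $W^{[\ell]}\in\mathbb{R}^{n^{[\ell]}\times n^{[\ell-1]}}$, bias $\theta^{[\ell]}\in\mathbb{R}^{n^{[\ell]}}$, and computes $y^{[\ell]}=f_\ell(W^{[\ell]}y^{[\ell-1]}+\theta^{[\ell]})$ with $f_\ell$ either the componentwise ReLU $z\mapsto\max(0,z)$ or the identity; $y^{[0]}=v^{[0]}$ is the network input and $g=f_L\circ\cdots$ denotes the resulting input-output map $v^{[0]}\mapsto y^{[L]}$. Let the input set be $\mathcal{V}^{[0]}=\bigcup_{s=1}^{N_0}\{v: H_s^{[0]}v\le b_s^{[0]}\}$. Define recursively $\mathcal{Y}^{[0]}=\mathcal{V}^{[0]}$ and, for $\ell=1,\ldots,L$ with $\mathcal{V}=\mathcal{Y}^{[\ell-1]}$, $W=W^{[\ell]}$, $\theta=\theta^{[\ell]}$, $n=n^{[\ell]}$: (i) if layer $\ell$ is linear, $\mathcal{Y}^{[\ell]}=\{Wv+\theta: v\in\mathcal{V}\}$; (ii) if layer $\ell$ is ReLU, $\mathcal{Y}^{[\ell]}=\bar{\mathcal{Y}}\cup\hat{\mathcal{Y}}\cup\bigcup_{m=1}^{2^n-2}\mathcal{Y}_m$, where $\bar{\mathcal{Y}}=\{0\}$ if $\{v\in\mathcal{V}: Wv+\theta\le 0\}\neq\emptyset$ and $\bar{\mathcal{Y}}=\emptyset$ otherwise; $\hat{\mathcal{Y}}=\{Wv+\theta: v\in\mathcal{V},\ Wv+\theta>0\}$;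 and $\mathcal{Y}_m=\{Q_m(Wv+\theta): v\in\mathcal{V},\ (I-Q_m)(Wv+\theta)\le0,\ Q_m(Wv+\theta)\ge 0\}$. Then the output reach set of the network satisfies $g(\mathcal{V}^{[0]})=\{g(v):v\in\mathcal{V}^{[0]}\}=\mathcal{Y}^{[L]}$.
   Context: Vector inequalities are componentwise ($>0$ means every component strictly positive). For a layer with $n$ neurons, $q_0,\ldots,q_{2^n-1}$ is an enumeration of $\{0,1\}^n$ with $q_0=(0,\ldots,0)$ and $q_{2^n-1}=(1,\ldots,1)$, and $Q_m=\mathrm{diag}(q_m)$; $I$ is the identity matrix. *)

(* Defs.v *)
From HB Require Import structures.
From mathcomp Require Import all_boot all_order all_algebra.
From mathcomp Require Import boolp classical_sets reals.
Set Implicit Arguments. Unset Strict Implicit. Unset Printing Implicit Defensive.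
Import Order.TTheory GRing.Theory Num.Theory.
Local Open Scope ring_scope.
Local Open Scope classical_set_scope.

Section MLP.
Variable R : realType.

Definition leV n (u v : 'cV[R]_n) : Prop := forall i, u i 0 <= v i 0.
Definition gtV0 n (u : 'cV[R]_n) : Prop := forall i, 0 < u i 0.

Definition relu n (z : 'cV[R]_n) : 'cV[R]_n := \col_i Num.max 0 (z i 0).

Definition Qmx n (q : {ffun 'I_n -> bool}) : 'M[R]_n := diag_mx (\row_i (q i)%:R).

(* Network description: layer k (k = 0..L-1) is the paper's layer k+1,
   mapping R^(dims k) to R^(dims k.+1); isrelu k says whether f_{k+1} is ReLU
   (otherwise the identity). *)
Variables (dims : nat -> nat)
          (W : forall k, 'M[R]_(dims k.+1, dims k))
          (theta : forall k, 'cV[R]_(dims k.+1))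
          (isrelu : nat -> bool).

Definition layer k (y : 'cV[R]_(dims k)) : 'cV[R]_(dims k.+1) :=
  let z := W k *m y + theta k in if isrelu k then relu z else z.

Fixpoint net (k : nat) : 'cV[R]_(dims 0%N) -> 'cV[R]_(dims k) :=
  match k return 'cV[R]_(dims 0%N) -> 'cV[R]_(dims k) with
  | O => fun v => v
  | k'.+1 => fun v => @layer k' (net k' v)
  end.

Definition layer_set k (V : set 'cV[R]_(dims k)) : set 'cV[R]_(dims k.+1) :=
  let aff := fun v => W k *m v + theta k in
  if isrelu k then
    [set y | y = 0 /\ [set v | V v /\ leV (aff v) 0] !=set0]
    `|` [set aff v | v in [set v | V v /\ gtV0 (aff v)]]
    (* union of Y_m over q_m different from (0,...,0) and (1,...,1) *)
    `|` [set y | exists q : {ffun 'I_(dims k.+1) -> bool},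
           [/\ q != [ffun=> false], q != [ffun=> true] &
            exists2 v, V v /\
              leV ((1%:M - Qmx q) *m aff v) 0 /\ leV 0 (Qmx q *m aff v)
            & y = Qmx q *m aff v]]
  else [set aff v | v in V].

Fixpoint reach (V0 : set 'cV[R]_(dims 0%N)) (k : nat) {struct k} : set 'cV[R]_(dims k) :=
  match k return set 'cV[R]_(dims k) with
  | O => V0
  | S k' => @layer_set k' (@reach V0 k')
  end.

End MLP.

Arguments reach {R dims} W theta isrelu V0 k.
Arguments layer_set {R dims} W theta isrelu k V.
Arguments net {R dims} W theta isrelu k.

Definition polyunion (R : realType) n (N0 : nat) (p : 'I_N0 -> nat)
  (H : forall s, 'M[R]_(p s, n)) (b : forall s, 'cV[R]_(p s)) : set 'cV[R]_n :=
  [set v | exists s : 'I_N0, leV (H s *m v) (b s)].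

(* Main.v *)
Require Import Defs.
From HB Require Import structures.
From mathcomp Require Import all_boot all_order all_algebra.
From mathcomp Require Import boolp classical_sets reals.
From mathcomp Require Import lra.
Set Implicit Arguments. Unset Strict Implicit. Unset Printing Implicit Defensive.
Import Order.TTheory GRing.Theory Num.Theory.
Local Open Scope ring_scope.
Local Open Scope classical_set_scope.

Lemma QE (R : realType) n (q : {ffun 'I_n -> bool}) (z : 'cV[R]_n) i :
  (Qmx R q *m z) i 0 = (q i)%:R * z i 0.
Proof. by rewrite /Qmx mul_diag_mx !mxE. Qed.

Lemma IQE (R : realType) n (q : {ffun 'I_n -> bool}) (z : 'cV[R]_n) i :
  ((1%:M - Qmx R q) *m z) i 0 = z i 0 - (q i)%:R * z i 0.
Proof. by rewrite -QE mulmxBl mul1mx !mxE. Qed.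

Lemma relu_set (R : realType) n (z : 'cV[R]_n) :
  [\/ (relu z = 0 /\ leV z 0), (relu z = z /\ gtV0 z) |
   exists q : {ffun 'I_n -> bool}, [/\ q != [ffun=> false], q != [ffun=> true],
     leV ((1%:M - Qmx R q) *m z) 0, leV 0 (Qmx R q *m z) & relu z = Qmx R q *m z]].
Proof.
set q := [ffun i => 0 < z i 0].
have Hq : relu z = Qmx R q *m z.
  apply/matrixP => i j; rewrite (ord1 j) QE /relu !mxE ffunE.
  case: ltP => h; first by rewrite mul1r; case: (ltP 0 (z i 0)) => //; lra.
  by rewrite mul0r; case: (ltP 0 (z i 0)) => //; lra.
have H1 : leV ((1%:M - Qmx R q) *m z) 0.
  move=> i; rewrite IQE mxE ffunE; case: ltP => h /=; lra.
have H2 : leV 0 (Qmx R q *m z).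
  move=> i; rewrite QE mxE ffunE; case: ltP => h /=; lra.
have [e0|n0] := eqVneq q [ffun=> false].
  constructor 1; split.
    by rewrite Hq e0; apply/matrixP => i j; rewrite (ord1 j) QE !mxE ffunE mul0r.
  move=> i; have := H1 i; rewrite IQE e0 ffunE mul0r subr0 //.
have [e1|n1] := eqVneq q [ffun=> true].
  constructor 2; split.
    by rewrite Hq e1; apply/matrixP => i j; rewrite (ord1 j) QE ffunE mul1r.
  move=> i; move: (congr1 (fun f : {ffun 'I_n -> bool} => f i) e1); rewrite !ffunE; by [].
by constructor 3; exists q.
Qed.

Lemma layer_image (R : realType) (dims : nat -> nat)
  (W : forall k, 'M[R]_(dims k.+1, dims k)) (theta : forall k, 'cV[R]_(dims k.+1))
  (isrelu : nat -> bool) k (V : set 'cV[R]_(dims k)) :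
  (@layer R dims W theta isrelu k) @` V = layer_set W theta isrelu k V.
Proof.
rewrite /layer /layer_set; case: (isrelu k); last by [].
apply/seteqP; split.
  move=> y [v Vv <-].
  case: (relu_set (W k *m v + theta k)) => [[-> h]|[-> h]|[q [n0 n1 h1 h2 ->]]].
  - by left; left; split => //; exists v.
  - by left; right; exists v.
  - by right; exists q; split => //; exists v.
move=> y [[[-> [v [Vv hv]]]|[v [Vv hv] <-]]|[q [n0 n1 [v [Vv [h1 h2]] ->]]]].
- exists v => //; set z := W k *m v + theta k in hv *; clearbody z.
  apply/matrixP => i j; rewrite (ord1 j) !mxE.
  by have := hv i; rewrite mxE => h; rewrite /Num.max; case: ltP => //; lra.
- exists v => //; set z := W k *m v + theta k in hv *; clearbody z.
  apply/matrixP => i j; rewrite (ord1 j) !mxE.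
  by have := hv i => h; rewrite /Num.max; case: ltP => //; lra.
- exists v => //; set z := W k *m v + theta k in h1 h2 *; clearbody z.
  apply/matrixP => i j; rewrite (ord1 j) QE !mxE.
  have := h1 i; have := h2 i; rewrite IQE QE !mxE.
  case: (q i) => /=; rewrite ?mul1r ?mul0r ?subr0 => a c;
    rewrite /Num.max; case: ltP => //; lra.
Qed.

Theorem proposition1 (R : realType) (L : nat) (dims : nat -> nat)
  (W : forall k, 'M[R]_(dims k.+1, dims k)) (theta : forall k, 'cV[R]_(dims k.+1))
  (isrelu : nat -> bool)
  (N0 : nat) (p : 'I_N0 -> nat)
  (H : forall s, 'M[R]_(p s, dims 0%N)) (b : forall s, 'cV[R]_(p s)) :
  let V0 := polyunion H b in
  (net W theta isrelu L) @` V0 = reach W theta isrelu V0 L.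
Proof.
move=> V0; elim: L => [|L IH] /=; first by rewrite image_id.
rewrite -IH -layer_image -image_comp; done.
Qed.
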